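(* Let $b,n\ge1$ and $1\le c\le b$ be integers and let $p_1,\dots,p_b\ge 0$ satisfy $p_1=\dots=p_c>p_{c+1}\ge\dots\ge p_b$. If $0\le k\le n(b-1)$ is such that $|\mathrm{LDS}_{\le k}|\le c^n$, then $\Pr(\mathrm{DBS}(c))\ge\Pr(\mathrm{LDS}_{\le k})$.
   Context: Search-tree model: a complete $b$-ary tree of depth $n$ whose leaves are identified with sequences $(j_1,\dots,j_n)\in\{1,\dots,b\}^n$. Given reals $p_1,\dots,p_b\ge0$, the success probability of a leaf is $\prod_{i=1}^n p_{j_i}$, and for a set $S$ of leaves, $\Pr(S)=\sum_{(j_1,\dots,j_n)\in S}\prod_{i=1}^n p_{j_i}$; $|S|$ is the number of leaves in $S$. For $1\le c\le b$, $\mathrm{DBS}(c)=\{1,\dots,c\}^n$. The discrepancy of a leaf $(j_1,\dots,j_n)$ is $\sum_{i=1}^n (j_i-1)$, and $\mathrm{LDS}_{\le k}$ is the set of leaves of discrepancy at most $k$. *)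

(* Defs.v *)
From mathcomp Require Import all_boot all_order all_algebra.
From mathcomp Require Import reals.
Set Implicit Arguments. Unset Strict Implicit. Unset Printing Implicit Defensive.
Import Order.TTheory GRing.Theory Num.Theory.
Local Open Scope ring_scope.

(* Leaves of the complete b-ary tree of depth n: sequences (j_1..j_n).
   Convention: branch index j : 'I_b (0-based) stands for the paper's j+1,
   so p j is the paper's p_{j+1}, and the paper's (j_i - 1) is val j. *)
Definition leaf (b n : nat) := {ffun 'I_n -> 'I_b}.

Definition leaf_prob (R : realType) (b n : nat) (p : 'I_b -> R) (l : leaf b n) : R :=
  \prod_(i < n) p (l i).

Definition Pr (R : realType) (b n : nat) (p : 'I_b -> R) (S : {set leaf b n}) : R :=
  \sum_(l in S) leaf_prob p l.

Definition DBS (b n c : nat) : {set leaf b n} := [set l : leaf b n | [forall i, (l i < c)%N]].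

Definition discrepancy (b n : nat) (l : leaf b n) : nat := (\sum_(i < n) val (l i))%N.

Definition LDS_le (b n k : nat) : {set leaf b n} :=
  [set l : leaf b n | (discrepancy l <= k)%N].

(* Main.v *)
Require Import Defs.
From mathcomp Require Import all_boot all_order all_algebra.
From mathcomp Require Import reals.
Import Order.TTheory GRing.Theory Num.Theory.
Local Open Scope ring_scope.

Lemma sum_const_le (R : realType) (T : finType) (A B : {set T}) (x : R) :
  0 <= x -> (#|A| <= #|B|)%N -> \sum_(l in A) x <= \sum_(l in B) x.
Proof.
move=> x0 hAB; rewrite !sumr_const.
exact: (ler_wpMn2l x0 hAB).
Qed.

Theorem mainTheorem3 (R : realType) (b n c k : nat) (p : 'I_b -> R) :
  (1 <= b)%N -> (1 <= n)%N -> (1 <= c)%N -> (c <= b)%N ->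
  (forall j, 0 <= p j) ->
  (* p_1 = ... = p_c *)
  (forall i j : 'I_b, (i < c)%N -> (j < c)%N -> p i = p j) ->
  (* p_c > p_{c+1} (when c < b) *)
  (forall i j : 'I_b, (i < c)%N -> (c <= j)%N -> p j < p i) ->
  (* p_{c+1} >= ... >= p_b *)
  (forall i j : 'I_b, (c <= i)%N -> (i <= j)%N -> p j <= p i) ->
  (k <= n * (b - 1))%N ->
  (#|LDS_le b n k| <= c ^ n)%N ->
  Pr p (LDS_le b n k) <= Pr p (DBS b n c).
Proof.
move=> hb hn hc hcb p0 peq plt _ _ hcard.
pose i0 : 'I_b := Ordinal hb.
have i0c : (i0 < c)%N by [].
pose q := p i0.
have q0 : 0 <= q by apply: p0.
have pq : forall j, p j <= q.
  move=> j; case: (ltnP j c) => hj.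
    by rewrite /q (peq j i0 hj i0c).
  by apply/ltW/plt.
have lp : forall l : leaf b n, leaf_prob p l <= q ^+ n.
  move=> l; rewrite /leaf_prob -[n in q ^+ n]card_ord -prodr_const.
  by apply: ler_prod => i _; rewrite p0 pq.
have ld : forall l : leaf b n, l \in DBS b n c -> leaf_prob p l = q ^+ n.
  move=> l; rewrite inE => /forallP hl.
  rewrite /leaf_prob -[n in q ^+ n]card_ord -prodr_const.
  by apply: eq_bigr => i _; rewrite /q (peq _ i0 (hl i) i0c).
have cardD : (c ^ n <= #|DBS b n c|)%N.
  pose f := fun g : {ffun 'I_n -> 'I_c} => [ffun i => widen_ord hcb (g i)] : leaf b n.
  have finj : injective f.
    move=> g1 g2 /ffunP h; apply/ffunP => i; have := h i; rewrite !ffunE.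
    by move/(congr1 val) => /= e; apply: val_inj.
  have <- : #|[set f x | x in {ffun 'I_n -> 'I_c}]| = (c ^ n)%N.
    by rewrite (card_imset _ finj) card_ffun !card_ord.
  apply: subset_leq_card; apply/subsetP => x /imsetP [g _ ->].
  by rewrite inE; apply/forallP => i; rewrite ffunE /=.
apply: (@le_trans _ _ (\sum_(l in LDS_le b n k) q ^+ n)).
  by rewrite /Pr; apply: ler_sum => l _; apply: lp.
have -> : Pr p (DBS b n c) = \sum_(l in DBS b n c) q ^+ n.
  by rewrite /Pr; apply: eq_bigr => l hl; apply: ld.
have cc : (#|LDS_le b n k| <= #|DBS b n c|)%N by exact: leq_trans hcard cardD.
exact: (@sum_const_le R _ (LDS_le b n k) (DBS b n c) (q ^+ n) (exprn_ge0 n q0) cc).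
Qed.
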